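(* Given the values of two fields, say $u$ and $v$, in three points $\mathfrak{z}_0$, $\mathfrak{z}_1=\mathfrak{z}_0+1$ and $\mathfrak{z}_2=\mathfrak{z}_0+\omega$, the equations of the $fgh$--system determine uniquely the values of $u$ and $v$ in the point $\mathfrak{z}_3=\mathfrak{z}_0+1+\omega$: \begin{equation} u_3-u_0=(u_1-u_0)\frac{v_1-v_0}{v_1-v_2}+(u_2-u_0)\frac{v_2-v_0}{v_2-v_1}, \end{equation} \begin{equation} v_3-v_1=(v_1-v_0)\frac{u_1-u_0}{u_0-u_3}\quad \Leftrightarrow\quad v_3-v_2=(v_2-v_0)\frac{u_2-u_0}{u_0-u_3}. \end{equation}
   Context: On the regular triangular lattice with vertices $k+\ell\omega+m\omega^2$ ($\omega=e^{2\pi i/3}$), the $fgh$--system for functions $u,v$ on the vertices (with $f=u(\mathfrak{z}_2)-u(\mathfrak{z}_1)$, $g=v(\mathfrak{z}_2)-v(\mathfrak{z}_1)$ on each positively oriented edge $(\mathfrak{z}_1,\mathfrak{z}_2)$, i.e. $\mathfrak{z}_2-\mathfrak{z}_1\in\{1,\omega,\omega^2\}$) amounts to the equation \[ \frac{u(\mathfrak{z}_2)-u(\mathfrak{z}_1)}{u(\mathfrak{z}_3)-u(\mathfrak{z}_2)}=\frac{v(\mathfrak{z}_3)-v(\mathfrak{z}_2)}{v(\mathfrak{z}_1)-v(\mathfrak{z}_3)} \] for every elementary triangle whose consecutive vertices $\mathfrak{z}_1,\mathfrak{z}_2,\mathfrak{z}_3$ satisfy $\mathfrak{z}_2-\mathfrak{z}_1,\mathfrak{z}_3-\mathfrak{z}_2,\mathfrak{z}_1-\mathfrak{z}_3\in\{1,\omega,\omega^2\}$.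 Notation $u_j=u(\mathfrak{z}_j)$, $v_j=v(\mathfrak{z}_j)$. *)

(* Defs.v *)
From HB Require Import structures.
From mathcomp Require Import all_boot all_order all_algebra.
From mathcomp Require Import ring.
Set Implicit Arguments. Unset Strict Implicit. Unset Printing Implicit Defensive.
Import Order.TTheory GRing.Theory Num.Theory.
Local Open Scope ring_scope.

(* Vertices of the regular triangular lattice: the pair (a, b) : int * int
   stands for the complex point a + b*omega.  (Every k + l omega + m omega^2
   equals (k - m) + (l - m) omega since omega^2 = -1 - omega.) *)
Definition lpt := (int * int)%type.
Definition ladd (z w : lpt) : lpt := (z.1 + w.1, z.2 + w.2)%R.
Definition lone : lpt := (1, 0)%R.
Definition lom  : lpt := (0, 1)%R.
Definition lom2 : lpt := (-1, -1)%R. (* the lattice vector omega^2 = -1 - omega *)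

Definition pos_edge (z1 z2 : lpt) : Prop :=
  z2 = ladd z1 lone \/ z2 = ladd z1 lom \/ z2 = ladd z1 lom2.

Definition elem_triangle (z1 z2 z3 : lpt) : Prop :=
  pos_edge z1 z2 /\ pos_edge z2 z3 /\ pos_edge z3 z1.

Definition fgh_eq (F : fieldType) (u v : lpt -> F) (z1 z2 z3 : lpt) : Prop :=
  (u z2 - u z1) / (u z3 - u z2) = (v z3 - v z2) / (v z1 - v z3).

Definition fgh_triangle (F : fieldType) (u v : lpt -> F) (z1 z2 z3 : lpt) : Prop :=
  fgh_eq u v z1 z2 z3 /\ fgh_eq u v z2 z3 z1 /\ fgh_eq u v z3 z1 z2.

Lemma elem_tri_A (z0 : lpt) :
  elem_triangle z0 (ladd z0 lone) (ladd (ladd z0 lone) lom).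
Proof.
case: z0 => a b; rewrite /elem_triangle /pos_edge /ladd /lone /lom /lom2 /=.
split; [left | split; [right; left | right; right]] => //.
by congr pair; rewrite !addr0 -!addrA ?subrr ?addr0 // addrC subrr addr0.
Qed.

Lemma elem_tri_B (z0 : lpt) :
  elem_triangle (ladd z0 lom) (ladd (ladd z0 lone) lom) z0.
Proof.
case: z0 => a b; rewrite /elem_triangle /pos_edge /ladd /lone /lom /lom2 /=.
split; [left | split; [right; right | right; left]]; congr pair; ring.
Qed.

(* Main.v *)
Require Import Defs.
From HB Require Import structures.
From mathcomp Require Import all_boot all_order all_algebra.
From mathcomp Require Import ring.
Import Order.TTheory GRing.Theory Num.Theory.
Local Open Scope ring_scope.

Ltac fs := field; try (repeat (apply/andP; split)); try assumption.

Lemma divE (F : fieldType) (x y z w : F) : y != 0 -> w != 0 ->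
  (x / y = z / w) <-> (x * w = z * y).
Proof.
move=> hy hw; split=> H.
  rewrite (_ : x * w = (x / y) * y * w); last by fs.
  by rewrite H; fs.
rewrite (_ : x / y = (x * w) / (y * w)); last by fs.
by rewrite H; fs.
Qed.

Lemma lin (F : fieldType) (x y p q k : F) : x - y = k * (p - q) -> p = q -> x = y.
Proof. by move=> E H; apply/eqP; rewrite -subr_eq0 E H subrr mulr0. Qed.
Lemma lin2 (F : fieldType) (x y p q p' q' k k' : F) :
  x - y = k * (p - q) + k' * (p' - q') -> p = q -> p' = q' -> x = y.
Proof. by move=> E H H'; apply/eqP; rewrite -subr_eq0 E H H' !subrr !mulr0 addr0. Qed.
Ltac linr2 H H' := first [apply: (@lin2 _ _ _ _ _ _ _ 1 1 _ H H'); ring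
  | apply: (@lin2 _ _ _ _ _ _ _ 1 (-1) _ H H'); ring
  | apply: (@lin2 _ _ _ _ _ _ _ (-1) 1 _ H H'); ring
  | apply: (@lin2 _ _ _ _ _ _ _ (-1) (-1) _ H H'); ring].
Ltac linr H := first [apply: (@lin _ _ _ _ _ 1 _ H); ring | apply: (@lin _ _ _ _ _ (-1) _ H); ring].

Lemma key (F : fieldType) (u0 u1 u2 u3 v0 v1 v2 v3 : F) :
  u1 != u0 -> u2 != u0 -> u3 != u0 -> u3 != u1 -> u3 != u2 ->
  v1 != v0 -> v2 != v0 -> v3 != v0 -> v3 != v1 -> v3 != v2 ->
  v1 != v2 ->
  (((u1-u0)/(u3-u1) = (v3-v1)/(v0-v3) /\ (u3-u1)/(u0-u3) = (v0-v3)/(v1-v0)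
     /\ (u0-u3)/(u1-u0) = (v1-v0)/(v3-v1)) /\
   ((u3-u2)/(u0-u3) = (v0-v3)/(v2-v0) /\ (u0-u3)/(u2-u0) = (v2-v0)/(v3-v2)
     /\ (u2-u0)/(u3-u2) = (v3-v2)/(v0-v3)) <->
     (u3 - u0 = (u1 - u0) * ((v1 - v0) / (v1 - v2))
                + (u2 - u0) * ((v2 - v0) / (v2 - v1))
      /\ v3 - v1 = (v1 - v0) * ((u1 - u0) / (u0 - u3)))) /\
  (((u1-u0)/(u3-u1) = (v3-v1)/(v0-v3) /\ (u3-u1)/(u0-u3) = (v0-v3)/(v1-v0)
     /\ (u0-u3)/(u1-u0) = (v1-v0)/(v3-v1)) /\
   ((u3-u2)/(u0-u3) = (v0-v3)/(v2-v0) /\ (u0-u3)/(u2-u0) = (v2-v0)/(v3-v2)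
     /\ (u2-u0)/(u3-u2) = (v3-v2)/(v0-v3)) <->
     (u3 - u0 = (u1 - u0) * ((v1 - v0) / (v1 - v2))
                + (u2 - u0) * ((v2 - v0) / (v2 - v1))
      /\ v3 - v2 = (v2 - v0) * ((u2 - u0) / (u0 - u3)))).
Proof.
have nz : forall x y : F, x != y -> x - y != 0 by move=> x y; rewrite subr_eq0.
have nz' : forall x y : F, x != y -> y - x != 0 by move=> x y; rewrite subr_eq0 eq_sym.
move=> h10 h20 h30 h31 h32 g10 g20 g30 g31 g32 g12.
rewrite !divE; try by [apply: nz | apply: nz'].
set E1 := (u1-u0)*(v1-v0) = (u0-u3)*(v3-v1).
set E2 := (u2-u0)*(v2-v0) = (u0-u3)*(v3-v2).
have T1 : ((u1 - u0) * (v0 - v3) = (v3 - v1) * (u3 - u1) /\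
      (u3 - u1) * (v1 - v0) = (v0 - v3) * (u0 - u3) /\
      (u0 - u3) * (v3 - v1) = (v1 - v0) * (u1 - u0)) <-> E1.
  rewrite /E1; split.
    by case=> _ [_ H]; linr H.
  move=> H; split; first by linr H.
  split; first by linr H.
  by linr H.
have T2 : ((u3 - u2) * (v2 - v0) = (v0 - v3) * (u0 - u3) /\
      (u0 - u3) * (v3 - v2) = (v2 - v0) * (u2 - u0) /\
      (u2 - u0) * (v0 - v3) = (v3 - v2) * (u3 - u2)) <-> E2.
  rewrite /E2; split.
    by case=> _ [H _]; linr H.
  move=> H; split; first by linr H.
  split; first by linr H.
  by linr H.
rewrite T1 T2.
have d12 := nz _ _ g12. have d21 := nz' _ _ g12. have d03 := nz' _ _ h30.
have Fm : u3 - u0 = (u1 - u0) * ((v1 - v0) / (v1 - v2))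
                + (u2 - u0) * ((v2 - v0) / (v2 - v1)) <->
          (u3 - u0) * (v1 - v2) = (u1-u0)*(v1-v0) - (u2-u0)*(v2-v0).
  split=> H.
    by rewrite H; fs.
  rewrite (_ : u3 - u0 = ((u3-u0)*(v1-v2))/(v1-v2)); last by fs.
  by rewrite H; fs.
have V1 : v3 - v1 = (v1 - v0) * ((u1 - u0) / (u0 - u3)) <-> E1.
  rewrite /E1; split=> H.
    by rewrite H; fs.
  rewrite (_ : v3 - v1 = ((u0-u3)*(v3-v1))/(u0-u3)); last by fs.
  by rewrite -H; fs.
have V2 : v3 - v2 = (v2 - v0) * ((u2 - u0) / (u0 - u3)) <-> E2.
  rewrite /E2; split=> H.
    by rewrite H; fs.
  rewrite (_ : v3 - v2 = ((u0-u3)*(v3-v2))/(u0-u3)); last by fs.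
  by rewrite -H; fs.
rewrite Fm V1 V2 /E1 /E2; split; split; case=> Ha Hb; split=> //; linr2 Ha Hb.
Qed.

(* The elementary
   triangles with vertices among z0..z3 are (z0,z1,z3) and (z2,z3,z0)
   (up to rotation); see elem_tri_A/B.  Nondegeneracy: u and v take different values at the
   ends of every edge involved, and v1 <> v2 (denominator in (1)). *)
Theorem lemma8 (F : fieldType) (u v : lpt -> F) (z0 : lpt) :
  let z1 := ladd z0 lone in
  let z2 := ladd z0 lom in
  let z3 := ladd (ladd z0 lone) lom in
  let u0 := u z0 in let u1 := u z1 in let u2 := u z2 in let u3 := u z3 in
  let v0 := v z0 in let v1 := v z1 in let v2 := v z2 in let v3 := v z3 in
  u1 != u0 -> u2 != u0 -> u3 != u0 -> u3 != u1 -> u3 != u2 ->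
  v1 != v0 -> v2 != v0 -> v3 != v0 -> v3 != v1 -> v3 != v2 ->
  v1 != v2 ->
  ((fgh_triangle u v z0 z1 z3 /\ fgh_triangle u v z2 z3 z0) <->
     (u3 - u0 = (u1 - u0) * ((v1 - v0) / (v1 - v2))
                + (u2 - u0) * ((v2 - v0) / (v2 - v1))
      /\ v3 - v1 = (v1 - v0) * ((u1 - u0) / (u0 - u3)))) /\
  ((fgh_triangle u v z0 z1 z3 /\ fgh_triangle u v z2 z3 z0) <->
     (u3 - u0 = (u1 - u0) * ((v1 - v0) / (v1 - v2))
                + (u2 - u0) * ((v2 - v0) / (v2 - v1))
      /\ v3 - v2 = (v2 - v0) * ((u2 - u0) / (u0 - u3)))).
Proof.
move=> z1 z2 z3 u0 u1 u2 u3 v0 v1 v2 v3.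
exact: (@key F u0 u1 u2 u3 v0 v1 v2 v3).
Qed.
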